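(* Let $(\mathcal R,\Sigma,\Delta)$ be a right triangulated category with right semi-equivalence. Suppose $\mathcal R$ is idempotent complete and additively finite (finitely many isomorphism classes of indecomposable objects, every object a finite direct sum of indecomposables). Then $\Sigma$ is an autoequivalence of $\mathcal R$; in particular $(\mathcal R,\Sigma,\Delta)$ is a triangulated category.
   Context: A right triangulated category $(\mathcal R,\Sigma,\Delta)$: additive category $\mathcal R$, additive endofunctor $\Sigma$, class $\Delta$ of right triangles $A\to B\to C\to\Sigma A$ satisfying the axioms of a triangulated category except that $\Sigma$ need not be an equivalence and only rotation to the right ($B\xrightarrow{y}C\xrightarrow{z}\Sigma A\xrightarrow{-\Sigma x}\Sigma B$) is required. $\Sigma$ is a right semi-equivalence if it is fully faithful and its essential image $\Sigma\mathcal R$ is closed under extensions (for every right triangle $A\to B\to C\to\Sigma A$ with $A,C\in\Sigma\mathcal R$ also $B\in\Sigma\mathcal R$). *)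

(* Defs.v *)
From HB Require Import structures.
From mathcomp Require Import all_boot all_algebra.
From Stdlib Require List.
Set Implicit Arguments. Unset Strict Implicit. Unset Printing Implicit Defensive.
Import GRing.Theory.
Local Open Scope ring_scope.

Record PreaddCat := {
  Obj :> Type;
  Hom : Obj -> Obj -> zmodType;
  idm : forall A, Hom A A;
  comp : forall A B C, Hom B C -> Hom A B -> Hom A C; (* comp g f = g o f *)
  compA : forall A B C D (h : Hom C D) (g : Hom B C) (f : Hom A B),
      comp h (comp g f) = comp (comp h g) f;
  comp1m : forall A B (f : Hom A B), comp (idm B) f = f;
  compm1 : forall A B (f : Hom A B), comp f (idm A) = f;
  compDl : forall A B C (g g' : Hom B C) (f : Hom A B),
      comp (g + g') f = comp g f + comp g' f;
  compDr : forall A B C (g : Hom B C) (f f' : Hom A B),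
      comp g (f + f') = comp g f + comp g f'
}.
Arguments idm {p} A.
Arguments comp {p A B C}.
Arguments Hom {p}.

Section Defs.
Variable C : PreaddCat.

Definition IsZero (Z : C) : Prop := forall f : Hom Z Z, f = 0.

Definition IsIso (A B : C) (f : Hom A B) : Prop :=
  exists g : Hom B A, comp g f = idm A /\ comp f g = idm B.

Definition Isomorphic (A B : C) : Prop := exists f : Hom A B, IsIso f.

Definition IsBiprod (A B D : C) (p1 : Hom A B) (p2 : Hom A D)
  (i1 : Hom B A) (i2 : Hom D A) : Prop :=
  [/\ comp p1 i1 = idm B, comp p2 i2 = idm D, comp p1 i2 = 0,
      comp p2 i1 = 0 & comp i1 p1 + comp i2 p2 = idm A].

Definition IsAdditive : Prop :=
  (exists Z : C, IsZero Z) /\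
  (forall B D : C, exists (A : C) (p1 : Hom A B) (p2 : Hom A D)
     (i1 : Hom B A) (i2 : Hom D A), IsBiprod p1 p2 i1 i2).

Definition IdempotentComplete : Prop :=
  forall (A : C) (e : Hom A A), comp e e = e ->
    exists (B : C) (r : Hom A B) (s : Hom B A),
      comp r s = idm B /\ comp s r = e.

Definition Indecomposable (A : C) : Prop :=
  ~ IsZero A /\
  forall (B D : C) (p1 : Hom A B) (p2 : Hom A D) (i1 : Hom B A) (i2 : Hom D A),
    IsBiprod p1 p2 i1 i2 -> IsZero B \/ IsZero D.

Fixpoint IsDirectSum (l : seq C) (A : C) : Prop :=
  match l with
  | [::] => IsZero A
  | X :: l' => exists (B : C) (p1 : Hom A X) (p2 : Hom A B)
                 (i1 : Hom X A) (i2 : Hom B A),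
                 IsBiprod p1 p2 i1 i2 /\ IsDirectSum l' B
  end.

Definition AdditivelyFinite : Prop :=
  (exists l : seq C, forall A : C, Indecomposable A ->
       exists2 X, List.In X l & Isomorphic A X) /\
  (forall A : C, exists l : seq C,
       (forall X, List.In X l -> Indecomposable X) /\ IsDirectSum l A).

End Defs.

Record AddEndo (C : PreaddCat) := {
  FO :> C -> C;
  FH : forall A B : C, Hom A B -> Hom (FO A) (FO B);
  FH_id : forall A, FH (idm A) = idm (FO A);
  FH_comp : forall A B D (g : Hom B D) (f : Hom A B),
      FH (comp g f) = comp (FH g) (FH f);
  FH_add : forall A B (f f' : Hom A B), FH (f + f') = FH f + FH f'
}.
Arguments FH {C} a {A B}.

Record Tri (C : PreaddCat) (S : AddEndo C) := MkTri {
  tA : C; tB : C; tC : C;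
  tf : Hom tA tB; tg : Hom tB tC; th : Hom tC (S tA)
}.
Arguments MkTri {C S tA tB tC}.

Section Triangulated.
Variables (C : PreaddCat) (S : AddEndo C) (D : Tri S -> Prop).

Definition TriMorph (T T' : Tri S) (a : Hom (tA T) (tA T'))
  (b : Hom (tB T) (tB T')) (c : Hom (tC T) (tC T')) : Prop :=
  [/\ comp b (tf T) = comp (tf T') a,
      comp c (tg T) = comp (tg T') b &
      comp (FH S a) (th T) = comp (th T') c].

Definition TriIsomorphic (T T' : Tri S) : Prop :=
  exists (a : Hom (tA T) (tA T')) (b : Hom (tB T) (tB T'))
    (c : Hom (tC T) (tC T')), TriMorph a b c /\ IsIso a /\ IsIso b /\ IsIso c.

Definition RightTriangulated : Prop :=
  (
      (forall T T', TriIsomorphic T T' -> D T -> D T')) /\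
      (forall (A Z : C), IsZero Z ->
         D (MkTri (idm A) (0 : Hom A Z) (0 : Hom Z (S A)))) /\
      (forall (A B : C) (f : Hom A B), exists (X : C) (g : Hom B X)
         (h : Hom X (S A)), D (MkTri f g h)) /\
      (forall T, D T -> D (MkTri (tg T) (th T) (- FH S (tf T)))) /\
      (forall T T', D T -> D T' ->
         forall (a : Hom (tA T) (tA T')) (b : Hom (tB T) (tB T')),
         comp b (tf T) = comp (tf T') a ->
         exists c : Hom (tC T) (tC T'), TriMorph a b c) /\
      (forall (X Y Z : C) (f : Hom X Y) (g : Hom Y Z)
         (Z' : C) (u1 : Hom Y Z') (w1 : Hom Z' (S X))
         (X' : C) (u2 : Hom Z X') (w2 : Hom X' (S Y))
         (Y' : C) (u3 : Hom Z Y') (w3 : Hom Y' (S X)),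
         D (MkTri f u1 w1) -> D (MkTri g u2 w2) -> D (MkTri (comp g f) u3 w3) ->
         exists (a : Hom Z' Y') (b : Hom Y' X'),
           [/\ D (MkTri a b (comp (FH S u1) w2)),
               comp a u1 = comp u3 g, comp w3 a = w1,
               comp b u3 = u2 & comp w2 b = comp (FH S f) w3]).

Definition FullyFaithful : Prop :=
  forall A B : C, bijective (@FH C S A B).

Definition InEssImage (X : C) : Prop := exists A : C, Isomorphic X (S A).

Definition RightSemiEquivalence : Prop :=
  FullyFaithful /\
  (forall T, D T -> InEssImage (tA T) -> InEssImage (tC T) -> InEssImage (tB T)).

Definition IsAutoequivalence : Prop :=
  FullyFaithful /\ (forall X : C, InEssImage X).

End Triangulated.

(* Main.v *)
Require Import Defs.
From mathcomp Require Import all_boot all_algebra.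
From Stdlib Require Import Classical ClassicalEpsilon.
From Stdlib Require List.
Set Implicit Arguments. Unset Strict Implicit. Unset Printing Implicit Defensive.
Import GRing.Theory.
Local Open Scope ring_scope.
Local Notation Hom := (@Defs.Hom _).
Local Notation comp := (@Defs.comp _ _ _ _).
Local Notation compA := Defs.compA.

Section Aux.
Variable C : PreaddCat.

Lemma comp0m (A B D : C) (f : Hom A B) : comp (0 : Hom B D) f = 0.
Proof.
have h := compDl (0:Hom B D) 0 f. rewrite addr0 in h.
have := congr1 (fun x => x - comp (0 : Hom B D) f) h.
rewrite /= subrr addrK. by move/esym.
Qed.

Lemma compm0 (A B D : C) (g : Hom B D) : comp g (0 : Hom A B) = 0.
Proof.
have h := compDr g (0:Hom A B) 0. rewrite addr0 in h.
have := congr1 (fun x => x - comp g (0 : Hom A B)) h.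
rewrite /= subrr addrK. by move/esym.
Qed.

Lemma compNm (A B D : C) (g : Hom B D) (f : Hom A B) : comp (-g) f = - comp g f.
Proof.
have h := compDl g (-g) f. rewrite subrr comp0m in h.
by apply/eqP; rewrite -addr_eq0 addrC -h.
Qed.

Lemma compmN (A B D : C) (g : Hom B D) (f : Hom A B) : comp g (-f) = - comp g f.
Proof.
have h := compDr g f (-f). rewrite subrr compm0 in h.
by apply/eqP; rewrite -addr_eq0 addrC -h.
Qed.

Lemma compBl (A B D : C) (g g' : Hom B D) (f : Hom A B) :
  comp (g - g') f = comp g f - comp g' f.
Proof. by rewrite compDl compNm. Qed.

Lemma compBr (A B D : C) (g : Hom B D) (f f' : Hom A B) :
  comp g (f - f') = comp g f - comp g f'.
Proof. by rewrite compDr compmN. Qed.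

Lemma idm_zero (X : C) : idm X = 0 -> IsZero X.
Proof. by move=> e f; rewrite -(compm1 f) e compm0. Qed.

Lemma zero_idm (X : C) : IsZero X -> idm X = 0.
Proof. by apply. Qed.

Lemma zero_iso (Z Z' : C) : IsZero Z -> IsZero Z' -> Isomorphic Z Z'.
Proof.
move=> hZ hZ'; exists 0, 0; split; rewrite comp0m; [exact: esym (hZ _)| exact: esym (hZ' _)].
Qed.

Lemma iso_refl (A : C) : Isomorphic A A.
Proof. by exists (idm A), (idm A); rewrite comp1m. Qed.

Lemma iso_sym (A B : C) : Isomorphic A B -> Isomorphic B A.
Proof. by case=> f [g [h1 h2]]; exists g, f. Qed.

Lemma iso_trans (A B D : C) : Isomorphic A B -> Isomorphic B D -> Isomorphic A D.
Proof.
case=> f [g [h1 h2]] [f2 [g2 [h3 h4]]].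
exists (comp f2 f), (comp g g2); split.
- by rewrite -compA (compA g2) h3 comp1m h1.
- by rewrite -compA (compA f) h2 comp1m h4.
Qed.

Lemma biprod_iso (A X B A' X' B' : C) (p1 : Hom A X) (p2 : Hom A B) (i1 : Hom X A) (i2 : Hom B A)
  (q1 : Hom A' X') (q2 : Hom A' B') (j1 : Hom X' A') (j2 : Hom B' A') :
  IsBiprod p1 p2 i1 i2 -> IsBiprod q1 q2 j1 j2 ->
  Isomorphic X X' -> Isomorphic B B' -> Isomorphic A A'.
Proof.
case=> h11 h22 h12 h21 hs [k11 k22 k12 k21 ks] [u [u' [hu1 hu2]]] [v [v' [hv1 hv2]]].
have c1 : forall (Z : C) (a : Hom Z X), comp p1 (comp i1 a) = a
  by move=> Z a; rewrite compA h11 comp1m.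
have c2 : forall (Z : C) (a : Hom Z B), comp p2 (comp i2 a) = a
  by move=> Z a; rewrite compA h22 comp1m.
have c3 : forall (Z : C) (a : Hom Z B), comp p1 (comp i2 a) = 0
  by move=> Z a; rewrite compA h12 comp0m.
have c4 : forall (Z : C) (a : Hom Z X), comp p2 (comp i1 a) = 0
  by move=> Z a; rewrite compA h21 comp0m.
have d1 : forall (Z : C) (a : Hom Z X'), comp q1 (comp j1 a) = a
  by move=> Z a; rewrite compA k11 comp1m.
have d2 : forall (Z : C) (a : Hom Z B'), comp q2 (comp j2 a) = a
  by move=> Z a; rewrite compA k22 comp1m.
have d3 : forall (Z : C) (a : Hom Z B'), comp q1 (comp j2 a) = 0
  by move=> Z a; rewrite compA k12 comp0m.
have d4 : forall (Z : C) (a : Hom Z X'), comp q2 (comp j1 a) = 0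
  by move=> Z a; rewrite compA k21 comp0m.
have e1 : forall (Z : C) (a : Hom Z X), comp u' (comp u a) = a
  by move=> Z a; rewrite compA hu1 comp1m.
have e2 : forall (Z : C) (a : Hom Z B), comp v' (comp v a) = a
  by move=> Z a; rewrite compA hv1 comp1m.
have e3 : forall (Z : C) (a : Hom Z X'), comp u (comp u' a) = a
  by move=> Z a; rewrite compA hu2 comp1m.
have e4 : forall (Z : C) (a : Hom Z B'), comp v (comp v' a) = a
  by move=> Z a; rewrite compA hv2 comp1m.
exists (comp j1 (comp u p1) + comp j2 (comp v p2)).
exists (comp i1 (comp u' q1) + comp i2 (comp v' q2)).
split.
- rewrite !compDl !compDr -!compA d1 d2 d3 d4 !compm0 !addr0 !add0r.
  by rewrite e1 e2.
- rewrite !compDl !compDr -!compA c1 c2 c3 c4 !compm0 !addr0 !add0r.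
  by rewrite e3 e4.
Qed.

Section Functor.
Variable S : AddEndo C.

Lemma FH0 (A B : C) : FH S (0 : Hom A B) = 0.
Proof.
have h := FH_add S (0:Hom A B) 0. rewrite addr0 in h.
have := congr1 (fun x => x - FH S (0 : Hom A B)) h.
rewrite /= subrr addrK. by move/esym.
Qed.

Lemma zero_S (Z : C) : IsZero Z -> IsZero (S Z).
Proof. by move=> hZ; apply: idm_zero; rewrite -FH_id (zero_idm hZ) FH0. Qed.

Lemma biprod_S (A X B : C) (p1 : Hom A X) (p2 : Hom A B) (i1 : Hom X A) (i2 : Hom B A) :
  IsBiprod p1 p2 i1 i2 -> IsBiprod (FH S p1) (FH S p2) (FH S i1) (FH S i2).
Proof.
case=> h11 h22 h12 h21 hs; split; rewrite -?FH_comp.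
- by rewrite h11 FH_id.
- by rewrite h22 FH_id.
- by rewrite h12 FH0.
- by rewrite h21 FH0.
- by rewrite -FH_add hs FH_id.
Qed.

Hypothesis hFF : FullyFaithful S.

Lemma FH_inj (A B : C) : injective (@FH C S A B).
Proof. exact: bij_inj (hFF A B). Qed.

Lemma FH_surj (A B : C) (g : Hom (S A) (S B)) : exists f, FH S f = g.
Proof. case: (hFF A B) => h _ hK; by exists (h g). Qed.

Lemma iso_reflect (A B : C) : Isomorphic (S A) (S B) -> Isomorphic A B.
Proof.
case=> f [g [h1 h2]].
have [f' ef] := FH_surj f; have [g' eg] := FH_surj g.
exists f', g'; split; apply: FH_inj; by rewrite FH_comp ef eg FH_id.
Qed.

Hypothesis hIC : IdempotentComplete C.

Lemma ind_S (A : C) : Indecomposable A -> Indecomposable (S A).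
Proof.
case=> nzA hA; split.
  move=> zSA; apply: nzA; apply: idm_zero; apply: FH_inj.
  by rewrite FH_id FH0; apply: zSA.
move=> B D p1 p2 i1 i2 [h11 h22 h12 h21 hs].
have ee : comp (comp i1 p1) (comp i1 p1) = comp i1 p1.
  by rewrite -compA (compA p1) h11 comp1m.
have [e' He'] := FH_surj (comp i1 p1).
have e'e' : comp e' e' = e' by apply: FH_inj; rewrite FH_comp He' ee.
have ff : comp (idm A - e') (idm A - e') = idm A - e'.
  by rewrite compBl !compBr !comp1m !compm1 e'e' subrr subr0.
have [B1 [r [s [rs sr]]]] := hIC e'e'.
have [B2 [r2 [s2 [rs2 sr2]]]] := hIC ff.
have re : comp r e' = r by rewrite -sr compA rs comp1m.
have es : comp e' s = s by rewrite -sr -compA rs compm1.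
have r2f : comp r2 (idm A - e') = r2 by rewrite -sr2 compA rs2 comp1m.
have fs2 : comp (idm A - e') s2 = s2 by rewrite -sr2 -compA rs2 compm1.
have ef : comp e' (idm A - e') = 0 by rewrite compBr compm1 e'e' subrr.
have fe : comp (idm A - e') e' = 0 by rewrite compBl comp1m e'e' subrr.
have hb : IsBiprod r r2 s s2.
  split => //.
  - by rewrite -[r]re -[s2]fs2 -compA (compA e') ef comp0m compm0.
  - by rewrite -[r2]r2f -[s]es -compA (compA (idm A - e')) fe comp0m compm0.
  - by rewrite sr sr2 addrC subrK.
have key1 : forall (X : C) (q : Hom (S A) X) (j : Hom X (S A)),
    comp q j = idm X -> comp (comp j q) (comp j q) = comp j q ->
    comp j q = 0 -> IsZero X.
  move=> X q j hqj _ hz; apply: idm_zero.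
  have e : comp (comp j q) j = j by rewrite -compA hqj compm1.
  by rewrite -hqj -e hz comp0m compm0.
case: (hA _ _ _ _ _ _ hb) => hz.
- left; apply: (key1 _ p1 i1 h11 ee).
  have : e' = 0 by rewrite -sr -(comp1m r) (zero_idm hz) comp0m compm0.
  by move=> h; rewrite -He' h FH0.
- right; apply: (key1 _ p2 i2 h22).
    by rewrite -compA (compA p2) h22 comp1m.
  have : idm A - e' = 0 by rewrite -sr2 -(comp1m r2) (zero_idm hz) comp0m compm0.
  move/eqP; rewrite subr_eq0 => /eqP h.
  have : comp i1 p1 = idm (S A) by rewrite -He' -h FH_id.
  move=> h'; rewrite h' in hs.
  have := congr1 (fun x => x - idm (S A)) hs.
  by rewrite /= subrr addrC addKr.
Qed.

End Functor.
End Aux.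

Fixpoint Sn (C : PreaddCat) (S : AddEndo C) (k : nat) (X : C) : C :=
  match k with 0 => X | k'.+1 => S (Sn S k' X) end.

Lemma Sn_add (C : PreaddCat) (S : AddEndo C) a b (X : C) : Sn S (a + b) X = Sn S a (Sn S b X).
Proof. by elim: a => [|a IH] //=; rewrite IH. Qed.

Theorem mainTheorem13 (C : PreaddCat) (S : AddEndo C) (D : Tri S -> Prop) :
  IsAdditive C ->
  RightTriangulated D ->
  RightSemiEquivalence D ->
  IdempotentComplete C ->
  AdditivelyFinite C ->
  IsAutoequivalence S.
Proof.
move=> [[Z hZ] hbp] _ [hFF _] hIC [[l0 hl0] hdec].
split => // X.
have reflect_Sn : forall a (P Q : C), Isomorphic (Sn S a P) (Sn S a Q) -> Isomorphic P Q.
  elim=> [|a IH] P Q //= h; apply: IH; exact: (iso_reflect hFF h).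
have indSn : forall k (Y : C), Indecomposable Y -> Indecomposable (Sn S k Y).
  elim=> [|k IH] Y hY //=; apply: ind_S => //; exact: IH.
have ess_from : forall (Y : C) i j, (i < j)%N -> Isomorphic (Sn S i Y) (Sn S j Y) -> InEssImage S Y.
  move=> Y i j hij h.
  have ej : j = (i + (j - i))%N by rewrite subnKC // ltnW.
  rewrite ej Sn_add in h.
  have h2 := reflect_Sn _ _ _ h.
  have ed : (j - i = (j - i).-1.+1)%N by rewrite prednK // subn_gt0.
  rewrite ed /= in h2; by exists (Sn S (j - i).-1 Y).
have indEss : forall Y : C, Indecomposable Y -> InEssImage S Y.
  move=> Y hY.
  pose N := length l0.
  have H : forall k : nat, exists m, (m < N)%N /\ Isomorphic (Sn S k Y) (List.nth m l0 Y).
    move=> k; have [W hW hiso] := hl0 _ (indSn k Y hY).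
    have [m [hm em]] := List.In_nth l0 W Y hW.
    by exists m; split; [apply/ltP | rewrite em].
  pose g (k : nat) := proj1_sig (constructive_indefinite_description _ (H k)).
  have gP : forall k, (g k < N)%N /\ Isomorphic (Sn S k Y) (List.nth (g k) l0 Y).
    move=> k; exact: proj2_sig (constructive_indefinite_description _ (H k)).
  pose f (i : 'I_N.+1) : 'I_N := Ordinal (proj1 (gP i)).
  have ninj : ~ injective f.
    move=> inj; have := leq_card f inj; by rewrite !card_ord ltnn.
  have [x [y [exy nxy]]] : exists x y, f x = f y /\ x <> y.
    apply: NNPP => hn; apply: ninj => x y exy; apply: NNPP => nxy.
    apply: hn; by exists x, y.
  have gxy : g x = g y by have := congr1 val exy.
  have hx := proj2 (gP x); have hy := proj2 (gP y); rewrite gxy in hx.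
  have hxy := iso_trans hx (iso_sym hy).
  case: (ltngtP x y) => c.
  - exact: ess_from c hxy.
  - exact: ess_from c (iso_sym hxy).
  - by exfalso; apply: nxy; apply: val_inj.
have [l [hl hds]] := hdec X.
elim: l X hl hds => [|W l IH] A hl /=.
  move=> hA; exists Z; apply: zero_iso => //; exact: zero_S.
move=> [B [p1 [p2 [i1 [i2 [hb hd]]]]]].
have [B' hB'] := IH B (fun Y hY => hl Y (or_intror hY)) hd.
have [W' hW'] := indEss W (hl W (or_introl erefl)).
have [A' [q1 [q2 [j1 [j2 hq]]]]] := hbp W' B'.
exists A'; apply: (biprod_iso hb (biprod_S S hq) hW' hB').
Qed.
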